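(* Let $\mathcal S\subset M_n$ be a matricial system (a self-adjoint subspace of $M_n$ containing $I_n$). Then $\mathrm{Ind}_{\mathrm{CP}}(M_n:\mathcal S)^{-1}$ equals the optimal value of the semidefinite program $$\begin{aligned}&\text{maximize } \lambda\quad(\lambda\in\mathbb R,\ X\in M_n\otimes M_n)\\ &\text{subject to } (\mathrm{tr}\otimes\mathrm{id})(X)=(1-\lambda)I_n,\\ &\qquad X+\lambda\Delta_n\in M_n\otimes\mathcal S,\\ &\qquad X\in(M_n\otimes M_n)^+,\end{aligned}$$ where $\Delta_n=\sum_{i,j=1}^nE_{ij}\otimes E_{ij}$.
   Context: $E_{ij}$ are the matrix units of $M_n$, $\mathrm{tr}$ is the (unnormalized) trace on $M_n$, and $\mathrm{tr}\otimes\mathrm{id}:M_n\otimes M_n\to M_n$ is the partial trace over the first factor. $M_n\otimes\mathcal S$ is the subspace of $M_n\otimes M_n$ spanned by $A\otimes B$, $A\in M_n$, $B\in\mathcal S$. For an operator system $\mathcal X$ with unit $1$, $\mathrm{CP}_1(\mathcal X)$ is the set of completely positive $\varphi:\mathcal X\to\mathcal X$ with $\varphi(\mathbb C1)\subset\mathbb C1$, and for a subsystem $\mathcal X_0$, $\mathrm{Ind}_{\mathrm{CP}}(\mathcal X:\mathcal X_0)=\inf\{\|\varphi(1)\|:\varphi\in\mathrm{CP}_1(\mathcal X),\ \varphi(\mathcal X)\subset\mathcal X_0,\ \varphi-\mathrm{id}_{\mathcal X}\text{ completely positive}\}$. *)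

(* Defs.v *)
From HB Require Import structures.
From mathcomp Require Import all_boot all_order all_algebra.
From mathcomp Require Import complex mxtens.
From mathcomp Require Import classical_sets reals.
Set Implicit Arguments. Unset Strict Implicit. Unset Printing Implicit Defensive.
Import Order.TTheory GRing.Theory Num.Theory.
Local Open Scope ring_scope.
Local Open Scope classical_set_scope.

Section Defs.
Variable R : realType.
Local Notation C := R[i].

Definition adj m p (A : 'M[C]_(m, p)) : 'M[C]_(p, m) := (map_mx Num.conj A)^T.

Definition psd m (A : 'M[C]_m) : Prop :=
  forall v : 'cV[C]_m, 0 <= (adj v *m A *m v) 0 0.

Definition opnorm m (A : 'M[C]_m) : R :=
  sup [set r : R | exists v : 'cV[C]_m,
        (adj v *m v) 0 0 = 1 /\ 0 <= r /\
        real_complex R (r ^+ 2) = (adj (A *m v) *m (A *m v)) 0 0].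

(* M_k (x) M_n is represented by 'M_(k * n) via the Kronecker product *t
   (first tensor factor = outer index).  blk i j X is the (i,j) block of X,
   i.e. X = \sum_(i,j) E_ij *t blk i j X. *)
Definition blk k n (i j : 'I_k) (X : 'M[C]_(k * n)) : 'M[C]_n :=
  \matrix_(a, b) X (mxtens_index (i, a)) (mxtens_index (j, b)).

Definition ampl n k (phi : 'M[C]_n -> 'M[C]_n) (X : 'M[C]_(k * n)) : 'M[C]_(k * n) :=
  \sum_(i < k) \sum_(j < k) (delta_mx i j *t phi (blk i j X)).

Definition CP n (phi : 'M[C]_n -> 'M[C]_n) : Prop :=
  linear phi /\ forall (k : nat) (X : 'M[C]_(k * n)), psd X -> psd (ampl phi X).

Definition matricial_system n (S : {vspace 'M[C]_n}) : Prop :=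
  (1%:M \in S) /\ forall A, A \in S -> adj A \in S.

Definition IndCP n (S : {vspace 'M[C]_n}) : R :=
  inf [set r : R | exists phi : 'M[C]_n -> 'M[C]_n,
        [/\ CP phi,
            (forall a : C, exists c : C, phi a%:M = c%:M),
            (forall A, phi A \in S),
            CP (fun A => phi A - A)
          & r = opnorm (phi 1%:M)]].

Definition ptrace n (X : 'M[C]_(n * n)) : 'M[C]_n := \sum_(i < n) blk i i X.

Definition in_tensS n (S : {vspace 'M[C]_n}) (X : 'M[C]_(n * n)) : Prop :=
  exists (m : nat) (A B : 'I_m -> 'M[C]_n),
    (forall k, B k \in S) /\ X = \sum_(k < m) (A k *t B k).

Definition Delta n : 'M[C]_(n * n) :=
  \sum_(i < n) \sum_(j < n) (delta_mx i j *t delta_mx i j).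

Definition sdp_feasible n (S : {vspace 'M[C]_n}) : set R :=
  [set l : R | exists X : 'M[C]_(n * n),
     [/\ ptrace X = (real_complex R (1 - l))%:M,
         in_tensS S (X + real_complex R l *: Delta n)
       & psd X]].

Definition sdp_value n (S : {vspace 'M[C]_n}) : R := sup (sdp_feasible S).

End Defs.

(* Main.v *)
Require Import Defs.
From HB Require Import structures.
From mathcomp Require Import all_boot all_order all_algebra.
From mathcomp Require Import complex mxtens.
From mathcomp Require Import classical_sets reals.
From mathcomp Require Import ring lra sesquilinear spectral boolp.
Import Order.TTheory GRing.Theory Num.Theory.
Local Open Scope ring_scope.
Set Implicit Arguments. Unset Strict Implicit. Unset Printing Implicit Defensive.

Section Basic.
Variable R : realType.
Local Notation C := R[i].

Lemma sum_tens (V : nmodType) k n (F : 'I_(k * n) -> V) :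
  \sum_(a < k * n) F a = \sum_(i < k) \sum_(p < n) F (mxtens_index (i, p)).
Proof.
rewrite pair_big /=; apply: reindex => /=.
by exists (@mxtens_unindex k n) => x _; rewrite ?mxtens_indexK ?mxtens_unindexK // -surjective_pairing.
Qed.

Definition qf m (X : 'M[C]_m) (v : 'cV[C]_m) : C :=
  \sum_(a < m) \sum_(b < m) (v a 0)^* * X a b * v b 0.

Lemma qfE m (X : 'M[C]_m) v : (adj v *m X *m v) 0 0 = qf X v.
Proof.
rewrite /qf mxE exchange_big /=; apply: eq_bigr => b _.
rewrite mxE mulr_suml; apply: eq_bigr => a _.
by rewrite /adj !mxE.
Qed.

Lemma psdP m (X : 'M[C]_m) : psd X <-> forall v, 0 <= qf X v.
Proof. by split => H v; [rewrite -qfE; apply: H | rewrite qfE]. Qed.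

End Basic.

Section Herm.
Variable R : realType.
Local Notation C := R[i].

Definition bf m (X : 'M[C]_m) (u w : 'cV[C]_m) : C := (adj u *m X *m w) 0 0.

Lemma adjmD m p (u w : 'M[C]_(m, p)) : adj (u + w) = adj u + adj w.
Proof. by rewrite /adj map_mxD linearD. Qed.

Lemma adjmZ m p (c : C) (u : 'M[C]_(m, p)) : adj (c *: u) = c^* *: adj u.
Proof. by apply/matrixP => i j; rewrite /adj !mxE rmorphM. Qed.

Lemma bfDl m (X : 'M[C]_m) u v w : bf X (u + v) w = bf X u w + bf X v w.
Proof. by rewrite /bf adjmD !mulmxDl mxE. Qed.
Lemma bfDr m (X : 'M[C]_m) u v w : bf X w (u + v) = bf X w u + bf X w v.
Proof. by rewrite /bf !mulmxDr mxE. Qed.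
Lemma bfZl m (X : 'M[C]_m) c u w : bf X (c *: u) w = c^* * bf X u w.
Proof. by rewrite /bf adjmZ -!scalemxAl mxE. Qed.
Lemma bfZr m (X : 'M[C]_m) c u w : bf X u (c *: w) = c * bf X u w.
Proof. by rewrite /bf -!scalemxAr mxE. Qed.

Lemma bf_delta m (X : 'M[C]_m) a b : bf X (delta_mx a 0) (delta_mx b 0) = X a b.
Proof.
rewrite /bf; have -> : adj (delta_mx a 0 : 'cV[C]_m) = delta_mx 0 a.
  by apply/matrixP => i j; rewrite /adj !mxE rmorph_nat andbC.
by rewrite -rowE -colE !mxE.
Qed.

Lemma psd_herm m (X : 'M[C]_m) : psd X -> forall a b, (X b a)^* = X a b.
Proof.
move=> hX a b.
have cq : forall v, (bf X v v)^* = bf X v v by move=> v; apply: geC0_conj; apply: hX.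
set u := delta_mx a 0 : 'cV[C]_m; set w := delta_mx b 0 : 'cV[C]_m.
have e1 := cq (u + w); rewrite !(bfDl, bfDr) !rmorphD /= !cq in e1.
have e2 := cq (u + 'i *: w); rewrite !(bfDl, bfDr, bfZl, bfZr) !rmorphD !rmorphM /= !cq conjCi in e2.
rewrite /u /w !bf_delta in e1 e2.
set p := X a b in e1 e2 *; set q := X b a in e1 e2 *.
rewrite rmorphN /= conjCi opprK in e2.
have E1 : p^* + q^* = p + q.
  by move: e1; rewrite -!addrA => /addrI; rewrite !addrA => /addIr.
have E2 : q^* - p^* = p - q.
  apply: (mulfI (neq0Ci C)); apply: (addrI (X a a)); apply: (addIr (- 'i * ('i * X b b))).
  rewrite [LHS](_ : _ = X a a + - 'i * p^* + ('i * q^* + 'i * (- 'i * X b b))); last by ring.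
  by rewrite e2; ring.
have -> : q^* = ((p^* + q^*) + (q^* - p^*)) / 2.
  by field.
by rewrite E1 E2; field.
Qed.

End Herm.

Section Gram.
Variable R : realType.
Local Notation C := R[i].
Local Open Scope sesquilinear_scope.

Lemma adjmE m p (A : 'M[C]_(m, p)) : adj A = A ^t* .
Proof. by rewrite /adj map_trmx. Qed.

Lemma psd_gram m (Y : 'M[C]_m) : psd Y ->
  exists Z : 'M[C]_m, forall a b, Y a b = \sum_r (Z r a)^* * Z r b.
Proof.
move=> hY.
have hT : Y ^t* = Y by apply/matrixP => i j; rewrite !mxE psd_herm.
have /orthomx_spectralP Yeq : Y \is normalmx by apply/normalmxP; rewrite hT.
set P := spectralmx Y in Yeq; set d := spectral_diag Y in Yeq.
have Pu : P \is unitarymx := spectral_unitarymx Y.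
rewrite invmx_unitary // in Yeq.
have d0 : forall r, 0 <= d 0 r.
  move=> r; have := hY (P^t* *m delta_mx r 0).
  rewrite adjmE trmx_mul map_mxM trmxCK -adjmE.
  have -> : adj (delta_mx r 0 : 'cV[C]_m) = delta_mx 0 r.
    by apply/matrixP => i j; rewrite /adj !mxE rmorph_nat andbC.
  rewrite Yeq !mulmxA mulmxtVK // mulmxtVK // -rowE -colE !mxE.
  by rewrite eqxx mulr1n.
exists (\matrix_(r, b) (sqrtC (d 0 r) * P r b)) => a b.
rewrite {1}Yeq mxE; apply: eq_bigr => r _.
rewrite mul_mx_diag !mxE rmorphM /= (geC0_conj (x := sqrtC _)); last by rewrite sqrtC_ge0.
rewrite mulrACA -expr2 sqrtCK; ring.
Qed.

End Gram.

Section Swap.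
Variable V : nmodType.
Lemma swap_r4 (I1 I2 I3 I4 I5 : finType) (F : I1 -> I2 -> I3 -> I4 -> I5 -> V) :
  \sum_r \sum_i \sum_a \sum_j \sum_b F r i a j b =
  \sum_i \sum_a \sum_j \sum_b \sum_r F r i a j b.
Proof.
rewrite exchange_big; apply: eq_bigr => i _; rewrite exchange_big.
apply: eq_bigr => a _; rewrite exchange_big; apply: eq_bigr => j _.
exact: exchange_big.
Qed.

Lemma swap_r2 (I1 I2 I3 : finType) (F : I1 -> I2 -> I3 -> V) :
  \sum_r \sum_p \sum_q F r p q = \sum_p \sum_q \sum_r F r p q.
Proof. rewrite exchange_big; apply: eq_bigr => p _; exact: exchange_big. Qed.

Lemma perm5 (I1 I2 I3 I4 I5 : finType) (F : I1 -> I2 -> I3 -> I4 -> I5 -> V) :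
  \sum_p \sum_j \sum_q \sum_a \sum_b F p j q a b =
  \sum_a \sum_j \sum_b \sum_p \sum_q F p j q a b.
Proof.
transitivity (\sum_p \sum_j \sum_a \sum_q \sum_b F p j q a b).
  by apply: eq_bigr => p _; apply: eq_bigr => j _; exact: exchange_big.
transitivity (\sum_p \sum_a \sum_j \sum_q \sum_b F p j q a b).
  by apply: eq_bigr => p _; exact: exchange_big.
rewrite exchange_big; apply: eq_bigr => a _.
rewrite exchange_big; apply: eq_bigr => j _.
transitivity (\sum_p \sum_b \sum_q F p j q a b).
  by apply: eq_bigr => p _; exact: exchange_big.
exact: exchange_big.
Qed.
End Swap.

Section Choi.
Variable R : realType.
Local Notation C := R[i].

Lemma sum_delta_l (k : nat) (i : 'I_k) (F : 'I_k -> C) :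
  \sum_(j < k) ((i == j)%:R * F j) = F i.
Proof.
rewrite (bigD1 i) //= eqxx mul1r big1 ?addr0 // => j /negPf.
by rewrite eq_sym => ->; rewrite mul0r.
Qed.

Lemma ampl_entry n k (phi : 'M[C]_n -> 'M[C]_n) (X : 'M[C]_(k * n)) i p j q :
  ampl phi X (mxtens_index (i, p)) (mxtens_index (j, q)) = phi (blk i j X) p q.
Proof.
rewrite /ampl summxE.
transitivity (\sum_(i' < k) ((i == i')%:R * phi (blk i j X) p q)); last first.
  by rewrite sum_delta_l.
apply: eq_bigr => i' _; rewrite summxE.
transitivity (\sum_(j' < k) ((i == i')%:R * ((j == j')%:R * phi (blk i' j' X) p q))).
  by apply: eq_bigr => j' _; rewrite tensmxE mxE; do 2 case: eqP => _ //=; ring.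
rewrite -mulr_sumr sum_delta_l; case: eqP => [->|_] //; by rewrite (mulr0n 1) !mul0r.
Qed.

Definition choimap n (Y : 'M[C]_(n * n)) (A : 'M[C]_n) : 'M[C]_n :=
  \sum_(a < n) \sum_(b < n) A a b *: blk a b Y.

Lemma choimap_linear n (Y : 'M[C]_(n * n)) : linear (choimap Y).
Proof.
move=> c u v; rewrite /choimap scaler_sumr -big_split; apply: eq_bigr => a _.
rewrite scaler_sumr -big_split; apply: eq_bigr => b _.
by rewrite !mxE scalerDl scalerA.
Qed.

Lemma choimap_entry n (Y : 'M[C]_(n * n)) A p q :
  choimap Y A p q = \sum_a \sum_b A a b * Y (mxtens_index (a, p)) (mxtens_index (b, q)).
Proof.
rewrite /choimap summxE; apply: eq_bigr => a _; rewrite summxE.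
by apply: eq_bigr => b _; rewrite !mxE.
Qed.

Lemma choimap_CP n (Y : 'M[C]_(n * n)) : psd Y -> CP (choimap Y).
Proof.
move=> hY; split; first exact: choimap_linear.
move=> k X /psdP hX; apply/psdP => v.
have [Z hZ] := psd_gram hY.
pose w (r : 'I_(n * n)) : 'cV[C]_(k * n) := \matrix_(al, _)
   \sum_(q < n) Z r (mxtens_index ((mxtens_unindex al).2, q)) *
                v (mxtens_index ((mxtens_unindex al).1, q)) 0.
suff -> : qf (ampl (choimap Y) X) v = \sum_r qf X (w r).
  by apply: sumr_ge0 => r _; apply: hX.
pose G i p j q a b := (v (mxtens_index (i, p)) 0)^* *
   (X (mxtens_index (i, a)) (mxtens_index (j, b)) *
    Y (mxtens_index (a, p)) (mxtens_index (b, q))) * v (mxtens_index (j, q)) 0.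
transitivity (\sum_i \sum_p \sum_j \sum_q \sum_a \sum_b G i p j q a b).
  rewrite /qf sum_tens; apply: eq_bigr => i _; apply: eq_bigr => p _.
  rewrite sum_tens; apply: eq_bigr => j _; apply: eq_bigr => q _.
  rewrite ampl_entry choimap_entry mulr_sumr mulr_suml; apply: eq_bigr => a _.
  rewrite mulr_sumr mulr_suml; apply: eq_bigr => b _.
  by rewrite /G mxE.
transitivity (\sum_i \sum_a \sum_j \sum_b \sum_p \sum_q G i p j q a b).
  by apply: eq_bigr => i _; exact: perm5.
rewrite /qf.
transitivity (\sum_r \sum_i \sum_a \sum_j \sum_b
   ((w r (mxtens_index (i, a)) 0)^* * X (mxtens_index (i, a)) (mxtens_index (j, b))
     * w r (mxtens_index (j, b)) 0)); last first.
  apply: eq_bigr => r _; rewrite sum_tens; apply: eq_bigr => i _; apply: eq_bigr => a _.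
  by rewrite sum_tens.
rewrite [RHS]swap_r4; apply: eq_bigr => i _; apply: eq_bigr => a _.
apply: eq_bigr => j _; apply: eq_bigr => b _.
transitivity (\sum_r \sum_p \sum_q
  ((Z r (mxtens_index (a, p)) * v (mxtens_index (i, p)) 0)^* *
    X (mxtens_index (i, a)) (mxtens_index (j, b)) *
    (Z r (mxtens_index (b, q)) * v (mxtens_index (j, q)) 0))); last first.
  apply: eq_bigr => r _; rewrite !mxE !mxtens_indexK /= rmorph_sum mulr_suml.
  rewrite mulr_suml; apply: eq_bigr => p _; rewrite mulr_sumr; apply: eq_bigr => q _ //.
rewrite swap_r2; apply: eq_bigr => p _; apply: eq_bigr => q _.
rewrite /G hZ mulr_sumr mulr_sumr mulr_suml; apply: eq_bigr => r _.
rewrite rmorphM /=; ring.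
Qed.

End Choi.

Section Help.
Variable R : realType.
Local Notation C := R[i].

Lemma qfD m (A B : 'M[C]_m) v : qf (A + B) v = qf A v + qf B v.
Proof.
rewrite /qf -big_split; apply: eq_bigr => a _; rewrite -big_split.
by apply: eq_bigr => b _; rewrite mxE mulrDr mulrDl.
Qed.

Lemma qfZ m c (A : 'M[C]_m) v : qf (c *: A) v = c * qf A v.
Proof.
rewrite /qf mulr_sumr; apply: eq_bigr => a _; rewrite mulr_sumr.
by apply: eq_bigr => b _; rewrite mxE; ring.
Qed.

Lemma psdD m (A B : 'M[C]_m) : psd A -> psd B -> psd (A + B).
Proof. by move=> /psdP hA /psdP hB; apply/psdP => v; rewrite qfD addr_ge0. Qed.

Lemma psdZ m c (A : 'M[C]_m) : 0 <= c -> psd A -> psd (c *: A).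
Proof. by move=> hc /psdP hA; apply/psdP => v; rewrite qfZ mulr_ge0. Qed.

Lemma psd_diag m (A : 'M[C]_m) a : psd A -> 0 <= A a a.
Proof. by move=> hA; have := hA (delta_mx a 0); rewrite -/(bf _ _ _) bf_delta. Qed.

Lemma blk_inj k n (X Y : 'M[C]_(k * n)) :
  (forall a b, blk a b X = blk a b Y) -> X = Y.
Proof.
move=> h; apply/matrixP => x y.
case: (mxtens_indexP x) => i p; case: (mxtens_indexP y) => j q.
by have /matrixP/(_ p q) := h i j; rewrite !mxE.
Qed.

Lemma blk_ampl n k (phi : 'M[C]_n -> 'M[C]_n) (X : 'M[C]_(k * n)) a b :
  blk a b (ampl phi X) = phi (blk a b X).
Proof. by apply/matrixP => p q; rewrite mxE ampl_entry. Qed.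

Lemma blkD k n (X Y : 'M[C]_(k * n)) a b : blk a b (X + Y) = blk a b X + blk a b Y.
Proof. by apply/matrixP => p q; rewrite !mxE. Qed.
Lemma blkN k n (X : 'M[C]_(k * n)) a b : blk a b (- X) = - blk a b X.
Proof. by apply/matrixP => p q; rewrite !mxE. Qed.
Lemma blkZ k n c (X : 'M[C]_(k * n)) a b : blk a b (c *: X) = c *: blk a b X.
Proof. by apply/matrixP => p q; rewrite !mxE. Qed.

Lemma blk_tens k n (A : 'M[C]_k) (B : 'M[C]_n) a b : blk a b (A *t B) = A a b *: B.
Proof. by apply/matrixP => p q; rewrite mxE tensmxE mxE. Qed.

Lemma blk_Delta n a b : blk a b (Delta R n) = delta_mx a b.
Proof.
rewrite /Delta; apply/matrixP => p q; rewrite mxE !summxE.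
transitivity (\sum_(i < n) ((a == i)%:R * \sum_(j < n) ((b == j)%:R *
   ((p == i) && (q == j))%:R)) : C).
  apply: eq_bigr => i _; rewrite summxE mulr_sumr; apply: eq_bigr => j _.
  by rewrite tensmxE !mxE; do 2 case: eqP => _ //=; rewrite ?mulr0n ?mul0r ?mulr0 // ?mulr1n ?mul1r.
rewrite sum_delta_l sum_delta_l mxE.
by rewrite [p == a]eq_sym [q == b]eq_sym.
Qed.

Lemma Delta_entry n i p j q :
  Delta R n (mxtens_index (i, p)) (mxtens_index (j, q)) = ((i == p)%:R * (j == q)%:R : C).
Proof.
have := blk_Delta i j; move/matrixP/(_ p q); rewrite mxE => ->.
rewrite mxE [p == i]eq_sym [q == j]eq_sym.
by case: eqP => _; case: eqP => _ //=; rewrite ?mulr0n ?mul0r ?mulr0 ?mulr1n ?mul1r.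
Qed.

Lemma psd_Delta n : psd (Delta R n).
Proof.
apply/psdP => v.
set s := \sum_(i < n) v (mxtens_index (i, i)) 0.
suff -> : qf (Delta R n) v = s^* * s by rewrite mulrC; apply: mul_conjC_ge0.
rewrite /qf sum_tens /s rmorph_sum mulr_suml; apply: eq_bigr => i _.
transitivity (\sum_(p < n) ((i == p)%:R * ((v (mxtens_index (i, p)) 0)^* *
    \sum_(j < n) v (mxtens_index (j, j)) 0))); last first.
  by rewrite sum_delta_l.
apply: eq_bigr => p _; rewrite sum_tens mulr_sumr mulr_sumr; apply: eq_bigr => j _.
transitivity (\sum_(q < n) ((j == q)%:R * ((i == p)%:R * ((v (mxtens_index (i, p)) 0)^* * v (mxtens_index (j, q)) 0)))).
  by apply: eq_bigr => q _; rewrite Delta_entry; ring.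
by rewrite sum_delta_l.
Qed.

Lemma ptraceD n (X Y : 'M[C]_(n * n)) : ptrace (X + Y) = ptrace X + ptrace Y.
Proof. by rewrite /ptrace -big_split; apply: eq_bigr => i _; rewrite blkD. Qed.
Lemma ptraceN n (X : 'M[C]_(n * n)) : ptrace (- X) = - ptrace X.
Proof. by rewrite /ptrace -sumrN; apply: eq_bigr => i _; rewrite blkN. Qed.
Lemma ptraceZ n c (X : 'M[C]_(n * n)) : ptrace (c *: X) = c *: ptrace X.
Proof. by rewrite /ptrace scaler_sumr; apply: eq_bigr => i _; rewrite blkZ. Qed.

Lemma sum_delta_diag n : \sum_(i < n) (delta_mx i i : 'M[C]_n) = 1%:M.
Proof.
apply/matrixP => p q; rewrite summxE !mxE.
transitivity (\sum_(i < n) ((p == i)%:R * (q == i)%:R : C)).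
  by apply: eq_bigr => i _; rewrite mxE; do 2 case: eqP => _ //=; rewrite ?mulr0n ?mul0r ?mulr0 ?mulr1n ?mul1r.
by rewrite sum_delta_l eq_sym.
Qed.

Lemma ptrace_Delta n : ptrace (Delta R n) = 1%:M.
Proof. by rewrite /ptrace -sum_delta_diag; apply: eq_bigr => i _; rewrite blk_Delta. Qed.

Lemma ptrace_diag n (X : 'M[C]_(n * n)) p : psd X -> 0 <= ptrace X p p.
Proof.
move=> hX; rewrite /ptrace summxE; apply: sumr_ge0 => i _; rewrite mxE.
exact: psd_diag.
Qed.

Lemma lin_props n (f : 'M[C]_n -> 'M[C]_n) : linear f ->
  [/\ f 0 = 0, forall u v, f (u + v) = f u + f v & forall c u, f (c *: u) = c *: f u].
Proof.
move=> lf.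
have f0 : f 0 = 0.
  have := lf 1 0 0; rewrite !scale1r addr0 => h.
  by apply: (addIr (f 0)); rewrite add0r -h.
split => //.
  by move=> u v; have := lf 1 u v; rewrite !scale1r.
by move=> c u; have := lf c u 0; rewrite !addr0 f0 addr0.
Qed.

Lemma lin_sum n k (f : 'M[C]_n -> 'M[C]_n) (F : 'I_k -> 'M[C]_n) : linear f ->
  f (\sum_(i < k) F i) = \sum_(i < k) f (F i).
Proof.
move=> /lin_props [f0 fD _]; elim: k F => [|k IH] F; first by rewrite !big_ord0.
by rewrite !big_ord_recr /= fD IH.
Qed.

Lemma blk_sum k n m (F : 'I_m -> 'M[C]_(k * n)) a b :
  blk a b (\sum_(r < m) F r) = \sum_(r < m) blk a b (F r).
Proof. by apply/matrixP => p q; rewrite mxE !summxE; apply: eq_bigr => r _; rewrite mxE. Qed.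

Lemma sum_delta2 n m (F : 'I_n -> 'I_n -> 'M[C]_m) a b :
  \sum_(i < n) \sum_(p < n) (delta_mx i p a b *: F i p) = F a b.
Proof.
apply/matrixP => r s; rewrite summxE.
transitivity (\sum_(i < n) ((a == i)%:R * \sum_(p < n) ((b == p)%:R * F i p r s))); last first.
  by rewrite !sum_delta_l.
apply: eq_bigr => i _; rewrite summxE mulr_sumr; apply: eq_bigr => p _.
rewrite !mxE; do 2 case: eqP => _ //=; by rewrite ?(mulr0n 1) ?mul0r ?mulr0 ?mulr1n ?mul1r.
Qed.

Lemma in_tensSP n (S : {vspace 'M[C]_n}) (X : 'M[C]_(n * n)) :
  in_tensS S X <-> forall a b, blk a b X \in S.
Proof.
split.
  move=> [m [A [B [hB ->]]]] a b.
  have -> : blk a b (\sum_(k < m) (A k *t B k)) = \sum_(k < m) (A k a b *: B k).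
    apply/matrixP => p q; rewrite mxE !summxE; apply: eq_bigr => k _.
    by rewrite tensmxE mxE.
  by apply: memv_suml => k _; apply: memvZ.
move=> h; exists (n * n)%N.
exists (fun r => delta_mx (mxtens_unindex r).1 (mxtens_unindex r).2).
exists (fun r => blk (mxtens_unindex r).1 (mxtens_unindex r).2 X).
split; first by move=> r; apply: h.
apply: blk_inj => a b; rewrite sum_tens blk_sum.
rewrite -[LHS](sum_delta2 (fun i p => blk i p X)); apply: eq_bigr => i _; rewrite blk_sum.
apply: eq_bigr => p _; by rewrite blk_tens mxtens_indexK.
Qed.

End Help.

Section Main.
Local Open Scope classical_set_scope.
Variable R : realType.
Local Notation C := R[i].
Local Notation "x %:C" := (real_complex R x).

Lemma adj_scalar_sq n (t : R) (v : 'cV[C]_n) : (adj v *m v) 0 0 = 1 ->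
  (adj ((t%:C)%:M *m v) *m ((t%:C)%:M *m v)) 0 0 = (t ^+ 2)%:C.
Proof.
move=> hv; rewrite mul_scalar_mx adjmZ -scalemxAl -scalemxAr !mxE.
move: hv; rewrite mxE => ->.
have -> : (t%:C)^* = t%:C by exact: conjc_real.
by rewrite mulr1 rmorphXn /= expr2.
Qed.

Lemma opnorm_scalar n (t : R) : (0 < n)%N -> 0 <= t ->
  opnorm ((t%:C)%:M : 'M[C]_n) = t.
Proof.
move=> hn ht; rewrite /opnorm.
pose e : 'cV[C]_n := delta_mx (Ordinal hn) 0.
have u1 : (adj e *m e) 0 0 = 1.
  have -> : adj e = delta_mx 0 (Ordinal hn).
    by apply/matrixP => i j; rewrite /adj !mxE rmorph_nat andbC.
  by rewrite mul_delta_mx mxE.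
have ub : ubound [set r : R | exists v : 'cV[C]_n,
        (adj v *m v) 0 0 = 1 /\ 0 <= r /\
        real_complex R (r ^+ 2) = (adj ((t%:C)%:M *m v) *m ((t%:C)%:M *m v)) 0 0] t.
  move=> r [v [hv [hr ee]]]; rewrite adj_scalar_sq // in ee.
  move: ee => /complexI /eqP; rewrite eqf_sqr => /orP [/eqP -> //| /eqP ee].
  by rewrite ee; lra.
have mem : [set r : R | exists v : 'cV[C]_n,
        (adj v *m v) 0 0 = 1 /\ 0 <= r /\
        real_complex R (r ^+ 2) = (adj ((t%:C)%:M *m v) *m ((t%:C)%:M *m v)) 0 0] t.
  exists e; split => //; split => //.
  by rewrite adj_scalar_sq.
apply/eqP; rewrite eq_le; apply/andP; split.
  by apply: ge_sup => //; exists t.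
by apply: ub_le_sup => //; exists t.
Qed.

Lemma lemA n (S : {vspace 'M[C]_n}) (phi : 'M[C]_n -> 'M[C]_n) : (0 < n)%N ->
  CP phi -> (forall a : C, exists c : C, phi a%:M = c%:M) -> (forall A, phi A \in S) ->
  CP (fun A => phi A - A) ->
  1 <= opnorm (phi 1%:M) /\ sdp_feasible S (opnorm (phi 1%:M))^-1.
Proof.
move=> hn [lin cp] hsc hS [_ cpd].
have [c hc] := hsc 1.
set Cp := ampl phi (Delta R n).
have hD : psd (Cp - Delta R n).
  have -> : Cp - Delta R n = ampl (fun A => phi A - A) (Delta R n).
    by apply: blk_inj => a b; rewrite blk_ampl blkD blkN blk_ampl blk_Delta.
  exact: (cpd n _ (@psd_Delta R n)).
have hpt : ptrace Cp = c%:M.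
  rewrite /ptrace; under eq_bigr => i _ do rewrite blk_ampl blk_Delta.
  by rewrite -lin_sum // sum_delta_diag hc.
have hptD : ptrace (Cp - Delta R n) = (c - 1)%:M.
  by rewrite ptraceD ptraceN hpt ptrace_Delta raddfB.
have c1 := ptrace_diag (Ordinal hn) hD; rewrite hptD mxE eqxx mulr1n in c1.
clear hpt; move: c hc hptD c1 => [x y] hc hptD; rewrite lecE /= => /andP [/eqP hy hx].
have y0 : y = 0 by move: hy; rewrite subr0.
subst y; rewrite -/(x%:C) in hc hptD.
rewrite hc opnorm_scalar //; last by lra.
have x1 : 1 <= x by lra.
have x0 : x != 0 by apply/eqP; lra.
split => //.
exists ((x^-1)%:C *: (Cp - Delta R n)); split.
- rewrite ptraceZ hptD scale_scalar_mx; congr (_%:M).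
  rewrite -[1 : C]/(1%:C) -rmorphB -rmorphM; congr (_%:C); by field.
- apply/in_tensSP => a b.
  rewrite scalerBr addrNK blkZ blk_ampl; apply: memvZ; exact: hS.
- apply: psdZ hD; by rewrite ler0c invr_ge0; lra.
Qed.

End Main.

Section Main2.
Local Open Scope classical_set_scope.
Variable R : realType.
Local Notation C := R[i].
Local Notation "x %:C" := (real_complex R x).

Lemma choimap_add n (Y1 Y2 : 'M[C]_(n * n)) A :
  choimap (Y1 + Y2) A = choimap Y1 A + choimap Y2 A.
Proof.
rewrite /choimap -big_split; apply: eq_bigr => a _; rewrite -big_split.
by apply: eq_bigr => b _; rewrite blkD scalerDr.
Qed.

Lemma choimap_Delta n (A : 'M[C]_n) : choimap (Delta R n) A = A.
Proof.
rewrite /choimap [RHS]matrix_sum_delta; apply: eq_bigr => a _.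
by apply: eq_bigr => b _; rewrite blk_Delta.
Qed.

Lemma choimap_scalar n (Y : 'M[C]_(n * n)) (a : C) :
  choimap Y a%:M = a *: ptrace Y.
Proof.
rewrite /choimap /ptrace scaler_sumr; apply: eq_bigr => i _.
rewrite (bigD1 i) //= mxE eqxx mulr1n big1 ?addr0 // => j /negPf.
by rewrite mxE eq_sym => ->; rewrite mulr0n scale0r.
Qed.

Lemma lemB n (S : {vspace 'M[C]_n}) l : (0 < n)%N -> sdp_feasible S l -> 0 < l ->
  exists phi : 'M[C]_n -> 'M[C]_n,
   [/\ CP phi, (forall a : C, exists c : C, phi a%:M = c%:M),
       (forall A, phi A \in S), CP (fun A => phi A - A)
     & l^-1 = opnorm (phi 1%:M)].
Proof.
move=> hn [X [hpt hin hX]] hl.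
set L := l%:C.
have L0 : L != 0 by rewrite /L fmorph_eq0; apply/eqP; lra.
have Li : 0 <= L^-1 by rewrite /L -fmorphV ler0c invr_ge0; lra.
set Y := L^-1 *: (X + L *: Delta R n).
have hY : psd Y.
  apply: psdZ => //; apply: psdD => //; apply: psdZ; first by rewrite ler0c; lra.
  exact: psd_Delta.
have hYD : Y = L^-1 *: X + Delta R n by rewrite /Y scalerDr scalerA mulVf // scale1r.
have hptY : ptrace Y = L^-1%:M.
  rewrite /Y ptraceZ ptraceD ptraceZ hpt ptrace_Delta scalemx1 -raddfD /=.
  by rewrite scale_scalar_mx rmorphB rmorph1 /= -/L subrK mulr1.
exists (choimap Y); split.
- exact: choimap_CP.
- by move=> a; exists (a * L^-1); rewrite choimap_scalar hptY scale_scalar_mx.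
- move=> A; rewrite /choimap; apply: memv_suml => a _; apply: memv_suml => b _.
  apply: memvZ; rewrite /Y blkZ; apply: memvZ.
  by move/in_tensSP: hin; apply.
- have -> : (fun A => choimap Y A - A) = choimap (L^-1 *: X).
    by apply: funext => A; rewrite hYD choimap_add choimap_Delta addrK.
  by apply: choimap_CP; apply: psdZ.
- rewrite choimap_scalar scale1r hptY /L -fmorphV opnorm_scalar //.
  by rewrite invr_ge0; lra.
Qed.

Lemma F0 n (S : {vspace 'M[C]_n}) : (0 < n)%N -> matricial_system S ->
  sdp_feasible S 0.
Proof.
move=> hn [h1 _].
have nz : (n%:R : C) != 0 by rewrite pnatr_eq0 -lt0n.
have b1 : forall a b, blk a b (1%:M : 'M[C]_(n * n)) = (a == b)%:R *: 1%:M.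
  move=> a b; apply/matrixP => p q; rewrite !mxE.
  rewrite (inj_eq (can_inj (@mxtens_indexK n n))) xpair_eqE.
  by do 2 case: eqP => _ //=; rewrite ?mulr0n ?mul0r ?mulr0 ?mulr1n ?mul1r.
exists ((n%:R : C)^-1 *: 1%:M); split.
- rewrite ptraceZ /ptrace.
  under eq_bigr => i _ do rewrite b1 eqxx scale1r.
  rewrite sumr_const card_ord; apply/matrixP => p q; rewrite mxE mulmxnE !mxE subr0 rmorph1.
  by case: eqP => _; rewrite ?mulr1n ?mulr0n ?mul0rn ?mulr0 ?mulVf.

- apply/in_tensSP => a b; rewrite rmorph0 scale0r addr0 blkZ b1.
  by apply: memvZ; apply: memvZ.
- apply: psdZ; first by rewrite invr_ge0 ler0n.
  apply/psdP => v; rewrite -qfE mulmx1 mxE; apply: sumr_ge0 => i _.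
  by rewrite /adj !mxE mulrC mul_conjC_ge0.
Qed.

Lemma Fub n (S : {vspace 'M[C]_n}) l : (0 < n)%N -> sdp_feasible S l -> l <= 1.
Proof.
move=> hn [X [hpt _ hX]]; have := ptrace_diag (Ordinal hn) hX.
by rewrite hpt mxE eqxx mulr1n ler0c subr_ge0.
Qed.

End Main2.

Local Open Scope classical_set_scope.

Theorem proposition4p1 (R : realType) (n : nat) (S : {vspace 'M[R[i]]_n}) :
  (0 < n)%N -> matricial_system S ->
  (IndCP S)^-1 = sdp_value S.
Proof.
move=> hn hS; rewrite /IndCP /sdp_value.
set E := [set r : R | _].
set F := sdp_feasible S.
have hA : forall r, E r -> 1 <= r /\ F r^-1.
  move=> r [phi [cp sc inS cpd ->]]; exact: lemA.
have hB : forall l, F l -> 0 < l -> E l^-1.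
  move=> l Fl l0; have [phi [? ? ? ? ?]] := lemB hn Fl l0; by exists phi; split.
have hF0 : F 0 := F0 hn hS.
have hF1 : forall l, F l -> l <= 1 := fun l => Fub hn.
have supF : has_sup F by split; [exists 0 | exists 1 => l /hF1].
have s0 : 0 <= sup F by apply: ub_le_sup => //; case: supF.
have [[r Er] | E0] := pselect (E !=set0); last first.
  have -> : E = set0 by apply/seteqP; split => // x Ex; apply: E0; exists x.
  rewrite inf0 invr0; apply/eqP; rewrite eq_le s0 /=.
  apply: ge_sup; first by exists 0.
  move=> l Fl; rewrite leNgt; apply/negP => l0.
  by apply: E0; exists l^-1; apply: hB.
have lbE : has_lbound E by exists 1 => x /hA [].
have I1 : 1 <= inf E by apply: lb_le_inf; [exists r | move=> x /hA []].
have I0 : 0 < inf E by lra.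
apply/eqP; rewrite eq_le; apply/andP; split; last first.
  apply: ge_sup; first by exists 0.
  move=> l Fl; have [l0|l0] := lerP l 0.
    by apply: le_trans l0 _; rewrite invr_ge0; lra.
  have El := hB l Fl l0.
  have := ge_inf lbE El.
  rewrite -(invrK (inf E)) invf_ple ?posrE ?invr_gt0 // => h.
  by move: h; rewrite !invrK.
have [r1 Fr] := hA r Er.
have sp : 0 < sup F.
  apply: lt_le_trans (ub_le_sup _ Fr) => //; first by rewrite invr_gt0; lra.
  by case: supF.
have : (sup F)^-1 <= inf E.
  apply: lb_le_inf; first by exists r.
  move=> x Ex; have [x1 Fx] := hA x Ex.
  have := ub_le_sup (proj2 supF) Fx.
  by rewrite -invf_ple ?posrE ?invr_gt0 //; lra.
by rewrite invf_ple ?posrE ?invr_gt0.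
Qed.
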